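(* Let $p \in \mathbb S$ be skew and let $t \in {}^\omega 2$ with $t \neq 0$. Then $|[p] \cap ([p] + t)| \leq 2$. In particular, $p$ and $p + t$ are incompatible in $\mathbb S$.
   Context: ${}^\omega 2$ is the Cantor space with bitwise addition modulo $2$; $0$ is the constant zero sequence. $\mathbb S$ is the set of perfect subtrees of ${}^{<\omega}2$, ordered by inclusion; $[p]$ is the set of branches of $p$; $p,q\in\mathbb S$ are compatible if some $r\in\mathbb S$ satisfies $r\subseteq p$ and $r\subseteq q$. For $p\in\mathbb S$ and $t\in{}^\omega 2$, $p+t=\{\sigma+t\restriction|\sigma| : \sigma\in p\}$. A node $\sigma\in p$ is splitting if both $\sigma^\frown 0,\sigma^\frown 1\in p$. A tree $p\in\mathbb S$ is skew if for every $n\in\omega$ there is at most one splitting node of $p$ of length $n$. *)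

(* Defs.v *)
From mathcomp Require Import all_boot.
Set Implicit Arguments. Unset Strict Implicit. Unset Printing Implicit Defensive.

Definition cantor := nat -> bool.
Definition node := seq bool.

Definition restr (t : cantor) (n : nat) : node := mkseq t n.

Definition cadd (x t : cantor) : cantor := fun n => addb (x n) (t n).

Definition nadd (s : node) (t : cantor) : node :=
  [seq addb (nth false s i) (t i) | i <- iota 0 (size s)].

Definition is_tree (p : node -> Prop) : Prop :=
  p [::] /\ forall s n, p s -> p (take n s).

Definition splitting (p : node -> Prop) (s : node) : Prop :=
  p (rcons s false) /\ p (rcons s true).

Definition perfect (p : node -> Prop) : Prop :=
  is_tree p /\ forall s, p s -> exists u, prefix s u /\ p u /\ splitting p u.

Definition branches (p : node -> Prop) (x : cantor) : Prop :=
  forall n, p (restr x n).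

Definition tadd (p : node -> Prop) (t : cantor) : node -> Prop :=
  fun u => exists s, p s /\ u = nadd s t.

Definition branches_add (p : node -> Prop) (t : cantor) : cantor -> Prop :=
  fun x => exists y, branches p y /\ x = cadd y t.

Definition compatible (p q : node -> Prop) : Prop :=
  exists r, perfect r /\ (forall s, r s -> p s) /\ (forall s, r s -> q s).

Definition skew (p : node -> Prop) : Prop :=
  forall s1 s2, splitting p s1 -> splitting p s2 -> size s1 = size s2 -> s1 = s2.

(* Main.v *)
From Stdlib Require Import Classical FunctionalExtensionality.
Require Import Defs.
From mathcomp Require Import all_boot.

Lemma size_nadd s t : size (nadd s t) = size s.
Proof. by rewrite /nadd size_map size_iota. Qed.

Lemma nth_nadd s t i : i < size s -> nth false (nadd s t) i = addb (nth false s i) (t i).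
Proof. by move=> hi; rewrite /nadd (nth_map 0) ?size_iota // nth_iota. Qed.

Lemma nadd_invol s t : nadd (nadd s t) t = s.
Proof.
apply: (@eq_from_nth _ false); rewrite !size_nadd // => i hi.
by rewrite nth_nadd ?size_nadd // nth_nadd // addbK.
Qed.

Lemma nadd_rcons u b t : nadd (rcons u b) t = rcons (nadd u t) (addb b (t (size u))).
Proof.
apply: (@eq_from_nth _ false); rewrite ?size_nadd !size_rcons ?size_nadd // => i hi.
rewrite nth_nadd ?size_rcons // !nth_rcons size_nadd.
case: ltngtP => h //.
- by rewrite nth_nadd.
- by move: hi; rewrite ltnS leqNgt h.
- by rewrite h.
Qed.

Lemma restr_cadd x t m : restr (cadd x t) m = nadd (restr x m) t.
Proof.
apply: (@eq_from_nth _ false); rewrite ?size_nadd !size_mkseq // => i hi.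
by rewrite nth_nadd ?size_mkseq // !nth_mkseq.
Qed.

Lemma restrS x k : restr x k.+1 = rcons (restr x k) (x k).
Proof.
apply: (@eq_from_nth _ false); rewrite ?size_rcons !size_mkseq // => i hi.
rewrite nth_mkseq // nth_rcons size_mkseq.
case: ltngtP => h.
- by rewrite nth_mkseq.
- by move: hi; rewrite ltnS leqNgt h.
- by rewrite h.
Qed.

Lemma restr_eq x y k : (forall i, i < k -> x i = y i) -> restr x k = restr y k.
Proof. by move=> h; apply/eq_in_map => i; rewrite mem_iota add0n => /h. Qed.

Lemma split_branch p a b k :
  branches p a -> branches p b -> (forall i, i < k -> a i = b i) -> a k <> b k ->
  splitting p (restr a k).
Proof.
move=> ha hb hab hk.
have e : restr b k = restr a k by symmetry; apply: restr_eq.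
have h1 := ha k.+1; have h2 := hb k.+1.
rewrite restrS in h1; rewrite restrS e in h2.
by case: (a k) (b k) hk h1 h2 => [] [] //; split.
Qed.

Lemma deep_split r : perfect r -> forall m, exists u, r u /\ splitting r u /\ m <= size u.
Proof.
move=> [[r0 _] hr]; elim=> [|m [u [ru [[s0 s1] hm]]]].
  by have [u [_ [ru su]]] := hr _ r0; exists u.
have [v [pv [rv sv]]] := hr _ s0.
exists v; split=> //; split=> //.
by have := size_prefix pv; rewrite size_rcons; apply: leq_trans.
Qed.

Theorem lemma2p6 (p : node -> Prop) (t : cantor) :
  perfect p -> skew p -> t <> (fun _ => false) ->
  (* |[p] ∩ ([p] + t)| <= 2 *)
  (forall x y z : cantor,
     branches p x /\ branches_add p t x ->
     branches p y /\ branches_add p t y ->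
     branches p z /\ branches_add p t z ->
     x = y \/ x = z \/ y = z) /\
  ~ compatible p (tadd p t).
Proof.
move=> hp hs ht.
have ex : exists n, t n.
  apply: NNPP => hn; apply: ht; apply: functional_extensionality => n.
  by case E: (t n) => //; exfalso; apply: hn; exists n.
split; last first.
  case: ex => n tn [r [hr [rp rt]]].
  have [u [ru [[s0 s1] hu]]] := @deep_split r hr n.+1.
  have key b : r (rcons u b) -> p (rcons (nadd u t) (addb b (t (size u)))).
    move=> /rt [s [ps e]].
    by rewrite -nadd_rcons e nadd_invol.
  have sp : splitting p u by split; apply: rp.
  have sq : splitting p (nadd u t).
    have k0 := key _ s0; have k1 := key _ s1.
    by case: (t (size u)) k0 k1 => /= ??; split.
  have e := hs _ _ sp sq (esym (size_nadd u t)).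
  have := congr1 (nth false ^~ n) e; rewrite /= nth_nadd // tn.
  by case: (nth false u n).
pose n := ex_minn ex.
have tn : t n by rewrite /n; case: ex_minnP.
have tlt : forall i, i < n -> t i = false.
  move=> i; rewrite /n; case: ex_minnP => m _ hm lt.
  by apply/negbTE/negP => /hm; rewrite leqNgt lt.
have good : forall x, branches p x /\ branches_add p t x -> branches p x /\ branches p (cadd x t).
  move=> x [bx [y [hy E]]]; subst x; split; first by []; move=> m.
  suff E : restr (cadd (cadd y t) t) m = restr y m by rewrite /restr in E *; rewrite E.
  by apply: restr_eq => i _; rewrite /cadd addbK.
have A : forall x, branches p x -> branches p (cadd x t) -> splitting p (restr x n).
  move=> x bx bx'; apply: (@split_branch _ _ _ _ bx bx').
    by move=> i /tlt; rewrite /cadd => ->; rewrite addbF.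
  by rewrite /cadd tn; case: (x n).
have B : forall x x', branches p x -> branches p (cadd x t) ->
         branches p x' -> branches p (cadd x' t) -> x n = x' n -> x = x'.
  move=> x x' b1 b2 b3 b4 hn; apply: functional_extensionality => m.
  elim/ltn_ind: m => m IH.
  case E: (x m == x' m); first by apply/eqP.
  exfalso; move/eqP: E => E.
  have s1 := @split_branch _ _ _ _ b1 b3 IH E.
  have s2 : splitting p (restr (cadd x t) m).
    apply: (@split_branch _ _ _ _ b2 b4); first by move=> i /IH; rewrite /cadd => ->.
    by rewrite /cadd; case: (t m) E; case: (x m); case: (x' m).
  have e := hs _ _ s1 s2 (ltac:(by rewrite !size_mkseq)).
  rewrite restr_cadd in e.
  have tz : forall i, i < m -> t i = false.
    move=> i lt; have := congr1 (nth false ^~ i) e.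
    by rewrite /= nth_nadd ?size_mkseq // nth_mkseq //; case: (x i); case: (t i).
  case: (ltngtP m n) => h.
  - have e2 := hs _ _ (A _ b1 b2) (A _ b3 b4) (ltac:(by rewrite !size_mkseq)).
    by apply: E; have := congr1 (nth false ^~ m) e2; rewrite /= !nth_mkseq.
  - by move: (tz _ h); rewrite tn.
  - by apply: E; rewrite h.
move=> x y z /good [bx bx'] /good [by' by''] /good [bz bz'].
case Ex: (x n); case Ey: (y n); case Ez: (z n);
  first [ left; apply: B; by rewrite ?Ex ?Ey
        | right; left; apply: B; by rewrite ?Ex ?Ez
        | right; right; apply: B; by rewrite ?Ey ?Ez ].
Qed.
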